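(* Let $q$ be a complex number with $|q|<1$. Then \[ \sum_{n\geq 0} q^{2n} (q^{4n+4};q^4)_\infty (q;q)_{2n} = \frac{2(q^4;q^4)_\infty}{1+q}- \frac{(q;q)_\infty}{1+q}, \] and \[ (1+q) \sum_{n\geq 0} \frac{(-q^2;q^2)_n\, q^{2n+1}}{(q;q^2)_{n+1}} = \frac{(q^4;q^4)_\infty}{(q;q)_\infty}-1 . \]
   Context: For a complex number $a$ and $|q|<1$: $(a;q)_0=1$, $(a;q)_n=\prod_{j=0}^{n-1}(1-aq^j)$ for integers $n\ge 1$, and $(a;q)_\infty=\prod_{j=0}^{\infty}(1-aq^j)$. *)

(* Defs.v *)
From Stdlib Require Import Reals.
From Coquelicot Require Import Coquelicot.
Open Scope C_scope.

Fixpoint qpoch (a q : C) (n : nat) : C :=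
  match n with O => 1 | S m => qpoch a q m * (1 - a * q ^ m) end.

(* infinite q-Pochhammer (a;q)_oo : the limit of the partial products
   (the limit exists for |q| < 1; C is a complete space) *)
Definition qpoch_inf (a q : C) : C :=
  @lim (C_CompleteNormedModule : CompleteSpace) (filtermap (qpoch a q) eventually).

(* Main.v *)
Require Import Defs.
From Stdlib Require Import Reals.
From Coquelicot Require Import Coquelicot.
Open Scope C_scope.
From Stdlib Require Import Lra Lia.

Definition cv (u : nat -> C) (l : C) : Prop :=
  forall eps : R, (0 < eps)%R -> exists N, forall n, (N <= n)%nat -> (Cmod (u n - l) < eps)%R.

Lemma cv_filterlim u l : cv u l <-> filterlim u eventually (locally l).
Proof.
  rewrite (filterlim_locally_ball_norm (K:=C_AbsRing) (U:=C_NormedModule)).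
  split.
  - intros H eps. destruct (H eps (cond_pos eps)) as [N HN].
    exists N. intros n Hn. unfold ball_norm. change (Cmod (u n - l) < eps)%R. apply HN; auto.
  - intros H eps Heps. destruct (H (mkposreal eps Heps)) as [N HN].
    exists N. intros n Hn. specialize (HN n Hn). unfold ball_norm in HN.
    change (Cmod (u n - l) < eps)%R in HN. exact HN.
Qed.

Lemma cv_unique u l1 l2 : cv u l1 -> cv u l2 -> l1 = l2.
Proof.
  rewrite !cv_filterlim. intros H1 H2.
  exact (filterlim_locally_unique (F:=eventually) u l1 l2 H1 H2).
Qed.

Lemma cv_lim u l : cv u l -> @lim (C_CompleteNormedModule : CompleteSpace) (filtermap u eventually) = l.
Proof.
  intros H. rewrite cv_filterlim in H.
  assert (HP : ProperFilter (filtermap u eventually)).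
  { apply filtermap_proper_filter. apply eventually_filter. }
  assert (Hc : cauchy (filtermap u eventually)).
  { intros eps. exists l. apply H. apply locally_ball. }
  pose proof (@complete_cauchy (C_CompleteNormedModule : CompleteSpace) (filtermap u eventually) HP Hc) as Hl.
  apply (filterlim_locally_unique (F:=eventually) u); [|exact H].
  apply (filterlim_locally (F:=eventually)). intros eps. apply Hl.
Qed.

Lemma cv_plus u v a b : cv u a -> cv v b -> cv (fun n => u n + v n) (a + b).
Proof.
  rewrite !cv_filterlim. intros Hu Hv.
  apply (filterlim_comp_2 (F:=eventually) u v (fun x y : C => x + y) Hu Hv).
  exact (filterlim_plus (K:=C_AbsRing) (V:=C_NormedModule) a b).
Qed.

Lemma cv_mult u v a b : cv u a -> cv v b -> cv (fun n => u n * v n) (a * b).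
Proof.
  intros Hu Hv e He.
  set (K := (Cmod a + Cmod b + 1)%R).
  assert (HK : (1 <= K)%R) by (unfold K; pose proof (Cmod_ge_0 a); pose proof (Cmod_ge_0 b); lra).
  set (d := Rmin 1 (e / (2 * K))).
  assert (Hd : (0 < d)%R).
  { unfold d. apply Rmin_pos. lra. apply Rdiv_lt_0_compat; lra. }
  destruct (Hu d Hd) as [N1 H1]. destruct (Hv d Hd) as [N2 H2].
  exists (N1 + N2)%nat. intros n Hn.
  specialize (H1 n ltac:(lia)). specialize (H2 n ltac:(lia)).
  replace (u n * v n - a * b) with ((u n - a) * v n + a * (v n - b)) by ring.
  eapply Rle_lt_trans. apply Cmod_triangle. rewrite !Cmod_mult.
  assert (Hvb : (Cmod (v n) <= Cmod b + 1)%R).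
  { replace (v n) with (b + (v n - b)) by ring.
    eapply Rle_trans. apply Cmod_triangle. assert (d <= 1)%R by apply Rmin_l. lra. }
  assert (Hde : (d * (2 * K) <= e)%R).
  { assert (d <= e / (2*K))%R by apply Rmin_r.
    apply Rmult_le_compat_r with (r := (2*K)%R) in H. 2: lra.
    unfold Rdiv in H. rewrite Rmult_assoc, Rinv_l in H by lra. lra. }
  pose proof (Cmod_ge_0 (u n - a)). pose proof (Cmod_ge_0 (v n - b)).
  pose proof (Cmod_ge_0 a). pose proof (Cmod_ge_0 (v n)).
  assert (Cmod (u n - a) * Cmod (v n) <= d * K)%R.
  { apply Rmult_le_compat; try lra. unfold K; lra. }
  assert (Cmod a * Cmod (v n - b) < K * d)%R.
  { apply Rle_lt_trans with (Cmod a * d)%R. apply Rmult_le_compat_l; lra.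
    apply Rmult_lt_compat_r. lra. unfold K. pose proof (Cmod_ge_0 b). lra. }
  lra.
Qed.

Lemma cv_const a : cv (fun _ => a) a.
Proof. intros e He. exists O. intros. unfold Cminus. rewrite Cplus_opp_r, Cmod_0. exact He. Qed.

Lemma cv_ext u v l : (forall n, u n = v n) -> cv u l -> cv v l.
Proof. intros E H e He. destruct (H e He) as [N HN]. exists N. intros. rewrite <- E. auto. Qed.

Lemma cv_sub u l (phi : nat -> nat) : (forall n, (n <= phi n)%nat) -> cv u l -> cv (fun n => u (phi n)) l.
Proof. intros Hp H e He. destruct (H e He) as [N HN]. exists N. intros. apply HN. specialize (Hp n). lia. Qed.

Lemma cv_inv u (a : C) : a <> 0 -> cv u a -> cv (fun n => / u n) (/ a).
Proof.
  intros Ha H e He.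
  assert (Hm : (0 < Cmod a)%R) by (apply Cmod_gt_0; exact Ha).
  set (d := Rmin (Cmod a / 2) (e * (Cmod a * Cmod a) / 2)).
  assert (Hd : (0 < d)%R).
  { unfold d. apply Rmin_pos. lra. apply Rmult_lt_0_compat; [|lra]. apply Rmult_lt_0_compat; auto. apply Rmult_lt_0_compat; auto. }
  destruct (H d Hd) as [N HN]. exists N. intros n Hn. specialize (HN n Hn).
  assert (H1 : (Cmod a / 2 <= Cmod (u n))%R).
  { assert (Cmod a <= Cmod (u n) + Cmod (a - u n))%R.
    { replace a with (u n + (a - u n)) at 1 by ring. apply Cmod_triangle. }
    assert (Cmod (a - u n) = Cmod (u n - a)).
    { replace (a - u n) with (- (u n - a)) by ring. apply Cmod_opp. }
    assert (d <= Cmod a / 2)%R by apply Rmin_l. lra. }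
  assert (Hun : u n <> 0).
  { intro E. rewrite E, Cmod_0 in H1. lra. }
  replace (/ u n - / a) with ((a - u n) / (u n * a)) by (field; auto).
  rewrite Cmod_div by (apply Cmult_neq_0; auto).
  rewrite Cmod_mult.
  assert (Cmod (a - u n) = Cmod (u n - a)).
  { replace (a - u n) with (- (u n - a)) by ring. apply Cmod_opp. }
  rewrite H0.
  assert (d <= e * (Cmod a * Cmod a) / 2)%R by apply Rmin_r.
  apply (Rmult_lt_reg_r (Cmod (u n) * Cmod a)). apply Rmult_lt_0_compat; lra.
  unfold Rdiv. rewrite Rmult_assoc, Rinv_l by (apply Rgt_not_eq; apply Rmult_lt_0_compat; lra).
  rewrite Rmult_1_r.
  apply Rlt_le_trans with (e * (Cmod a * Cmod a) / 2)%R. lra.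
  assert (0 <= e * Cmod a * (Cmod (u n) - Cmod a / 2))%R.
  { apply Rmult_le_pos; [|lra]. apply Rmult_le_pos; lra. }
  nra.
Qed.

Lemma cv_pow0 r : (Cmod r < 1)%R -> cv (fun n => r ^ n) 0.
Proof.
  intros Hr e He.
  assert (Hg := is_lim_seq_geom (Cmod r)).
  rewrite Rabs_pos_eq in Hg by apply Cmod_ge_0.
  specialize (Hg Hr). apply is_lim_seq_spec in Hg.
  destruct (Hg (mkposreal e He)) as [N HN]. exists N. intros n Hn.
  specialize (HN n Hn). simpl in HN.
  unfold Cminus. rewrite Copp_0, Cplus_0_r, Cmod_pow.
  rewrite Rminus_0_r, Rabs_pos_eq in HN. exact HN. apply pow_le, Cmod_ge_0.
Qed.

Lemma qpoch_add a r m k : qpoch a r (m + k) = qpoch a r m * qpoch (a * r ^ m) r k.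
Proof.
  induction k as [|k IH].
  - rewrite Nat.add_0_r. simpl. ring.
  - rewrite Nat.add_succ_r. simpl. rewrite IH, Cpow_add_r. ring.
Qed.

Lemma Cmod_1_minus x : (Cmod (1 - x) <= 1 + Cmod x)%R.
Proof.
  unfold Cminus. eapply Rle_trans. apply Cmod_triangle. rewrite Cmod_1, Cmod_opp. lra.
Qed.

Definition gs (s : R) (n : nat) : R := ((1 - s ^ n) / (1 - s))%R.

Lemma gs_S s n : s <> 1%R -> gs s (S n) = (gs s n + s ^ n)%R.
Proof. intros. unfold gs. simpl. field. lra. Qed.

Lemma gs_le s n : (0 <= s < 1)%R -> (0 <= gs s n <= / (1 - s))%R.
Proof.
  intros Hs. unfold gs. assert (0 <= s ^ n <= 1)%R.
  { split. apply pow_le; lra. rewrite <- (pow1 n). apply pow_incr; lra. }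
  split. apply Rdiv_le_0_compat; lra.
  unfold Rdiv. rewrite <- (Rmult_1_l (/ (1 - s))) at 2. apply Rmult_le_compat_r.
  apply Rlt_le, Rinv_0_lt_compat; lra. lra.
Qed.

Section Prod.
Variables (a r : C).
Hypothesis Hr : (Cmod r < 1)%R.

Let s := Cmod r.
Let K := exp (Cmod a / (1 - s)).

Lemma qpoch_bound_aux n : (Cmod (qpoch a r n) <= exp (Cmod a * gs s n))%R.
Proof.
  assert (Hs : (0 <= s < 1)%R) by (split; [apply Cmod_ge_0|exact Hr]).
  induction n as [|n IH].
  - simpl. unfold gs. simpl. rewrite Cmod_1. replace ((1 - 1) / (1 - s))%R with 0%R by (field; lra).
    rewrite Rmult_0_r, exp_0. lra.
  - simpl. rewrite Cmod_mult. rewrite gs_S by lra. rewrite Rmult_plus_distr_l, exp_plus.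
    apply Rmult_le_compat; try apply Cmod_ge_0. exact IH.
    eapply Rle_trans. apply Cmod_1_minus. rewrite Cmod_mult, Cmod_pow.
    apply exp_ineq1_le.
Qed.

Lemma exp_le x y : (x <= y)%R -> (exp x <= exp y)%R.
Proof. intros H. destruct (Rle_lt_or_eq_dec _ _ H) as [H'|H']. left; apply exp_increasing; auto. rewrite H'; lra. Qed.

Lemma qpoch_bound n : (Cmod (qpoch a r n) <= K)%R.
Proof.
  assert (Hs : (0 <= s < 1)%R) by (split; [apply Cmod_ge_0|exact Hr]).
  eapply Rle_trans. apply qpoch_bound_aux. unfold K. apply exp_le.
  unfold Rdiv. apply Rmult_le_compat_l. apply Cmod_ge_0. apply gs_le; auto.
Qed.

Lemma qpoch_diff n : (Cmod (qpoch a r n - 1) <= K * Cmod a * gs s n)%R.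
Proof.
  assert (Hs : (0 <= s < 1)%R) by (split; [apply Cmod_ge_0|exact Hr]).
  induction n as [|n IH].
  - simpl. unfold gs. simpl. replace (1 - 1) with (RtoC 0) by ring. rewrite Cmod_0.
    replace ((1 - 1) / (1 - s))%R with 0%R by (field; lra). lra.
  - simpl. replace (qpoch a r n * (1 - a * r ^ n) - 1) with ((qpoch a r n - 1) + - (qpoch a r n * (a * r ^ n))) by ring.
    eapply Rle_trans. apply Cmod_triangle. rewrite Cmod_opp, !Cmod_mult, Cmod_pow.
    rewrite gs_S by lra. fold s.
    assert (Cmod (qpoch a r n) * (Cmod a * s ^ n) <= K * (Cmod a * s ^ n))%R.
    { apply Rmult_le_compat_r. apply Rmult_le_pos. apply Cmod_ge_0. apply pow_le; lra. apply qpoch_bound. }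
    lra.
Qed.

Lemma K_pos : (0 < K)%R.
Proof. apply exp_pos. Qed.

Lemma cv_S u l : cv (fun n => u (S n)) l -> cv u l.
Proof. intros H e He. destruct (H e He) as [N HN]. exists (S N). intros n Hn.
  destruct n. lia. apply HN. lia. Qed.

Lemma sum_tele (p : nat -> C) N : sum_n (fun k => p (S k) - p k) N = p (S N) - p O.
Proof.
  induction N as [|N IH].
  - rewrite sum_O. reflexivity.
  - rewrite sum_Sn, IH. change (plus (p (S N) - p O) (p (S (S N)) - p (S N)) = p (S (S N)) - p O).
    unfold plus; simpl. ring.
Qed.

Lemma qpoch_cv : cv (qpoch a r) (qpoch_inf a r).
Proof.
  assert (Hs : (0 <= s < 1)%R) by (split; [apply Cmod_ge_0|exact Hr]).
  set (d := fun k => qpoch a r (S k) - qpoch a r k).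
  assert (Hex : ex_series (V := C_CompleteNormedModule) d).
  { apply (ex_series_le (K:=C_AbsRing) (V:=C_CompleteNormedModule) d (fun n => scal (K * Cmod a)%R (s ^ n)%R)).
    - intros n. change (Cmod (d n) <= K * Cmod a * s ^ n)%R.
      unfold d. simpl. replace (qpoch a r n * (1 - a * r ^ n) - qpoch a r n) with (- (qpoch a r n * (a * r ^ n))) by ring.
      rewrite Cmod_opp, !Cmod_mult, Cmod_pow. fold s.
      rewrite Rmult_assoc. apply Rmult_le_compat_r. apply Rmult_le_pos. apply Cmod_ge_0. apply pow_le; lra. apply qpoch_bound.
    - apply (@ex_series_scal R_AbsRing R_NormedModule). exists (/ (1 - s))%R. apply is_series_geom. rewrite Rabs_pos_eq; lra. }
  destruct Hex as [L HL].
  assert (Hc : cv (qpoch a r) (L + 1)).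
  { apply cv_S. apply cv_ext with (fun N => sum_n d N + 1).
    - intros N. unfold d. rewrite sum_tele. simpl. ring.
    - apply cv_plus. apply cv_filterlim. exact HL. apply cv_const. }
  unfold qpoch_inf. rewrite (cv_lim _ _ Hc). exact Hc.
Qed.

End Prod.

Lemma qpoch_nz_fin a r n : (forall j, a * r ^ j <> 1) -> qpoch a r n <> 0.
Proof.
  intros H. induction n as [|n IH]; simpl.
  - apply C1_nz.
  - apply Cmult_neq_0; auto. intro E. apply (H n). 
    replace (a * r ^ n) with (1 - (1 - a * r ^ n)) by ring. rewrite E. ring.
Qed.

Lemma qpoch_inf_nz a r : (Cmod r < 1)%R -> (forall j, a * r ^ j <> 1) -> qpoch_inf a r <> 0.
Proof.
  intros Hr H.
  set (s := Cmod r).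
  assert (Hs : (0 <= s < 1)%R) by (split; [apply Cmod_ge_0|exact Hr]).
  pose proof (Cmod_ge_0 a) as Ha0.
  set (eps := ((1 - s) / (8 * (Cmod a + 1)))%R).
  assert (He : (0 < eps)%R) by (unfold eps; apply Rdiv_lt_0_compat; lra).
  destruct (cv_pow0 r Hr eps He) as [J HJ]. specialize (HJ J (le_n J)).
  unfold Cminus in HJ. rewrite Copp_0, Cplus_0_r in HJ.
  set (b := a * r ^ J).
  assert (Hb : (Cmod b / (1 - s) <= 1/8)%R).
  { unfold b. rewrite Cmod_mult.
    assert (Cmod a * Cmod (r ^ J) <= (Cmod a + 1) * eps)%R.
    { apply Rmult_le_compat; try lra; apply Cmod_ge_0. }
    assert ((Cmod a + 1) * eps = (1 - s) / 8)%R by (unfold eps; field; lra).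
    apply (Rmult_le_reg_r (1 - s)). lra. unfold Rdiv. rewrite Rmult_assoc, Rinv_l by lra. lra. }
  assert (Ht : forall m, (5/8 <= Cmod (qpoch b r m))%R).
  { intros m. pose proof (qpoch_diff b r Hr m) as D.
    fold s in D.
    assert (HK : (exp (Cmod b / (1 - s)) <= 3)%R).
    { apply Rle_trans with (exp 1). apply exp_le. lra. apply exp_le_3. }
    pose proof (gs_le s m Hs) as G.
    assert (Cmod b * gs s m <= 1/8)%R.
    { eapply Rle_trans. apply Rmult_le_compat_l. apply Cmod_ge_0. apply G. exact Hb. }
    assert (exp (Cmod b / (1 - s)) * Cmod b * gs s m <= 3 / 8)%R.
    { rewrite Rmult_assoc. pose proof (exp_pos (Cmod b / (1 - s))).
      assert (0 <= Cmod b * gs s m)%R by (apply Rmult_le_pos; [apply Cmod_ge_0|lra]). nra. }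
    assert (H3 : (Cmod 1 <= Cmod (qpoch b r m) + Cmod (1 - qpoch b r m))%R).
    { pose proof (Cmod_triangle (qpoch b r m) (1 - qpoch b r m)) as T.
      replace (qpoch b r m + (1 - qpoch b r m)) with (RtoC 1) in T by ring. exact T. }
    rewrite Cmod_1 in H3. replace (1 - qpoch b r m) with (- (qpoch b r m - 1)) in H3 by ring.
    rewrite Cmod_opp in H3. lra. }
  assert (Esplit : qpoch_inf a r = qpoch a r J * qpoch_inf b r).
  { apply (cv_unique (fun m => qpoch a r (J + m))).
    - apply (cv_sub (qpoch a r)). intros; lia. apply qpoch_cv; auto.
    - apply cv_ext with (fun m => qpoch a r J * qpoch b r m).
      + intros m. rewrite qpoch_add. reflexivity.
      + apply cv_mult. apply cv_const. apply qpoch_cv; auto. }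
  rewrite Esplit. apply Cmult_neq_0. apply qpoch_nz_fin; auto.
  intro T0. destruct (qpoch_cv b r Hr (1/8)%R ltac:(lra)) as [N HN].
  specialize (HN N (le_n N)). rewrite T0 in HN. unfold Cminus in HN. rewrite Copp_0, Cplus_0_r in HN.
  specialize (Ht N). lra.
Qed.

Lemma cv_opp u l : cv u l -> cv (fun n => - u n) (- l).
Proof.
  intros H. apply cv_ext with (fun n => (-1) * u n). intros; ring.
  replace (- l) with ((-1) * l) by ring. apply cv_mult. apply cv_const. exact H.
Qed.

Lemma cv_minus u v a b : cv u a -> cv v b -> cv (fun n => u n - v n) (a - b).
Proof. intros. unfold Cminus. apply cv_plus; auto. apply cv_opp; auto. Qed.

Lemma cv_div u v (a b : C) : b <> 0 -> cv u a -> cv v b -> cv (fun n => u n / v n) (a / b).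
Proof. intros Hb Hu Hv. unfold Cdiv. apply cv_mult. exact Hu. apply cv_inv. exact Hb. exact Hv. Qed.

Lemma Cmod_pow_le1 r j : (Cmod r <= 1)%R -> (Cmod (r ^ j) <= 1)%R.
Proof. intros. rewrite Cmod_pow. rewrite <- (pow1 j). apply pow_incr. split; auto. apply Cmod_ge_0. Qed.

Lemma Cmod_mul_lt1 a x : (Cmod a < 1)%R -> (Cmod x <= 1)%R -> (Cmod (a * x) < 1)%R.
Proof. intros. rewrite Cmod_mult. pose proof (Cmod_ge_0 a). pose proof (Cmod_ge_0 x). nra. Qed.

Lemma neq1_of_lt x : (Cmod x < 1)%R -> x <> 1.
Proof. intros H E. rewrite E, Cmod_1 in H. lra. Qed.

Lemma one_minus_nz x : (Cmod x < 1)%R -> 1 - x <> 0.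
Proof. intros H E. apply (neq1_of_lt x H). replace x with (1 - (1 - x)) by ring. rewrite E. ring. Qed.

Lemma one_plus_nz x : (Cmod x < 1)%R -> 1 + x <> 0.
Proof. intros H. replace (1 + x) with (1 - - x) by ring. apply one_minus_nz. rewrite Cmod_opp. auto. Qed.

Lemma nz_cond a r : (Cmod a < 1)%R -> (Cmod r <= 1)%R -> forall j, a * r ^ j <> 1.
Proof. intros. apply neq1_of_lt. apply Cmod_mul_lt1; auto. apply Cmod_pow_le1; auto. Qed.

Lemma le1_mul a b : (Cmod a <= 1)%R -> (Cmod b <= 1)%R -> (Cmod (a * b) <= 1)%R.
Proof. intros. rewrite Cmod_mult. pose proof (Cmod_ge_0 a). pose proof (Cmod_ge_0 b). nra. Qed.

Section Main.
Variable q : C.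
Hypothesis hq : (Cmod q < 1)%R.

Lemma q_le1 : (Cmod q <= 1)%R. Proof. lra. Qed.
Lemma qk_le1 k : (Cmod (q ^ k) <= 1)%R. Proof. apply Cmod_pow_le1, q_le1. Qed.
Lemma qk_lt1 k : (Cmod (q ^ S k) < 1)%R. Proof. rewrite Cpow_S. apply Cmod_mul_lt1; auto. apply qk_le1. Qed.

Lemma q4_lt1 : (Cmod (q ^ 4) < 1)%R. Proof. apply (qk_lt1 3). Qed.
Lemma q2_lt1 : (Cmod (q ^ 2) < 1)%R. Proof. apply (qk_lt1 1). Qed.

Definition D n := qpoch q q (2 * n).
Definition E n := qpoch (q ^ 4) (q ^ 4) n.
Definition G n := qpoch (- q ^ 2) (q ^ 2) n.
Definition H n := qpoch q (q ^ 2) n.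
Definition A := qpoch_inf (q ^ 4) (q ^ 4).
Definition B := qpoch_inf q q.

Lemma E_nz n : E n <> 0.
Proof. apply qpoch_nz_fin, nz_cond. apply q4_lt1. apply Rlt_le, q4_lt1. Qed.
Lemma D_nz n : D n <> 0.
Proof. apply qpoch_nz_fin, nz_cond; auto. apply q_le1. Qed.
Lemma H_nz n : H n <> 0.
Proof. apply qpoch_nz_fin, nz_cond; auto. apply Rlt_le, q2_lt1. Qed.
Lemma A_nz : A <> 0.
Proof. apply qpoch_inf_nz. apply q4_lt1. apply nz_cond. apply q4_lt1. apply Rlt_le, q4_lt1. Qed.
Lemma B_nz : B <> 0.
Proof. apply qpoch_inf_nz; auto. apply nz_cond; auto. apply q_le1. Qed.

Lemma P1 n : (q ^ 2) ^ n = q ^ (2 * n).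
Proof. rewrite Cpow_mult_r. reflexivity. Qed.
Lemma P2 n : (q ^ 4) ^ n = q ^ (2 * n) * q ^ (2 * n).
Proof. rewrite <- Cpow_mult_r, <- Cpow_add_r. f_equal. lia. Qed.
Lemma P3 n : q ^ (2 * n + 1) = q * q ^ (2 * n).
Proof. rewrite Cpow_add_r. simpl. ring. Qed.
Lemma P4 n : q ^ (2 * S n) = q ^ 2 * q ^ (2 * n).
Proof. rewrite <- Cpow_add_r. f_equal. lia. Qed.
Lemma P5 n : q ^ (4 * n + 4) = q ^ 4 * (q ^ 4) ^ n.
Proof. rewrite <- Cpow_mult_r, <- Cpow_add_r. f_equal. lia. Qed.

Lemma D_S n : D (S n) = D n * (1 - q * q ^ (2 * n)) * (1 - q * (q * q ^ (2 * n))).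
Proof. unfold D. replace (2 * S n)%nat with (S (S (2 * n))) by lia. simpl qpoch. reflexivity. Qed.
Lemma E_S n : E (S n) = E n * (1 - q ^ 4 * (q ^ (2 * n) * q ^ (2 * n))).
Proof. unfold E. simpl qpoch. rewrite P2. reflexivity. Qed.

Lemma A_split n : qpoch_inf (q ^ (4 * n + 4)) (q ^ 4) = A / E n.
Proof.
  assert (Eq : A = E n * qpoch_inf (q ^ (4 * n + 4)) (q ^ 4)).
  { apply (cv_unique (fun m => E (n + m))).
    - unfold E, A. apply (cv_sub (qpoch (q^4) (q^4))). intros; lia. apply qpoch_cv, q4_lt1.
    - apply cv_ext with (fun m => E n * qpoch (q ^ (4 * n + 4)) (q ^ 4) m).
      + intros m. unfold E. rewrite qpoch_add, P5. reflexivity.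
      + apply cv_mult. apply cv_const. apply qpoch_cv, q4_lt1. }
  rewrite Eq. field. apply E_nz.
Qed.

Definition f1 n := q ^ (2 * n) * qpoch_inf (q ^ (4 * n + 4)) (q ^ 4) * qpoch q q (2 * n).

Lemma tele1 N : (1 + q) * sum_n f1 N = A * (2 - (1 + q ^ (2 * S N)) * D (S N) / E (S N)).
Proof.
  induction N as [|N IH].
  - rewrite sum_O. unfold f1. rewrite A_split. fold (D 0).
    rewrite D_S, E_S, P4. unfold D, E. simpl. field.
    assert (Hc : 1 - q ^ 4 <> 0) by (apply one_minus_nz, q4_lt1).
    intro Hc'. apply Hc. rewrite <- Hc'. simpl. ring.
  - rewrite sum_Sn. change (plus (sum_n f1 N) (f1 (S N))) with (sum_n f1 N + f1 (S N)).
    rewrite Cmult_plus_distr_l, IH. unfold f1. rewrite A_split. fold (D (S N)).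
    rewrite (D_S (S N)), (E_S (S N)), !P4.
    set (x := q ^ (2 * N)).
    pose proof (E_nz (S N)). rewrite E_S in H0. fold x in H0.
    field. split; [|apply E_nz].
    apply one_minus_nz. apply Cmod_mul_lt1. apply q4_lt1.
    apply le1_mul; apply le1_mul; try apply qk_le1; unfold x; apply qk_le1.
Qed.


Lemma part1 : is_series f1 (2 * A / (1 + q) - B / (1 + q)).
Proof.
  apply (proj1 (cv_filterlim _ _)).
  assert (Hq1 : 1 + q <> 0) by (apply one_plus_nz; auto).
  apply cv_ext with (fun N => A * (2 - (1 + q ^ (2 * S N)) * D (S N) / E (S N)) / (1 + q)).
  { intros N. change (@eq C (A * (2 - (1 + q ^ (2 * S N)) * D (S N) / E (S N)) / (1 + q)) (sum_n f1 N)).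
    rewrite <- tele1. field. auto. }
  replace (2 * A / (1 + q) - B / (1 + q)) with (A * (2 - (1 + 0) * B / A) / (1 + q))
    by (field; repeat split; try apply A_nz; auto).
  apply cv_div; [auto| |apply cv_const].
  apply cv_mult. apply cv_const. apply cv_minus. apply cv_const.
  apply cv_div. apply A_nz.
  - apply cv_mult. apply cv_plus. apply cv_const.
    apply (cv_sub (fun n => q ^ n)). intros; lia. apply cv_pow0; auto.
    unfold D, B. apply (cv_sub (qpoch q q)). intros; lia. apply qpoch_cv; auto.
  - unfold E, A. apply (cv_sub (qpoch (q^4) (q^4))). intros; lia. apply qpoch_cv, q4_lt1.
Qed.

Definition g n := qpoch (- q ^ 2) (q ^ 2) n * q ^ (2 * n + 1) / qpoch q (q ^ 2) (n + 1).

Lemma G_S n : G (S n) = G n * (1 - - q ^ 2 * q ^ (2 * n)).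
Proof. unfold G. cbn [qpoch]. rewrite P1. reflexivity. Qed.
Lemma H_S n : H (S n) = H n * (1 - q * q ^ (2 * n)).
Proof. unfold H. cbn [qpoch]. rewrite P1. reflexivity. Qed.

Lemma tele2 N : (1 + q) * sum_n g N = G (S N) / H (S N) - 1.
Proof.
  induction N as [|N IH].
  - rewrite sum_O. unfold g. change (qpoch (- q ^ 2) (q ^ 2) 0) with (G 0).
    change (qpoch q (q ^ 2) (0 + 1)) with (H 1).
    rewrite G_S, H_S. unfold G, H. cbn [qpoch]. simpl. field.
    replace (q * 1) with q by ring. apply one_minus_nz; auto.
  - rewrite sum_Sn. change (plus (sum_n g N) (g (S N))) with (sum_n g N + g (S N)).
    rewrite Cmult_plus_distr_l, IH. unfold g. rewrite (Nat.add_1_r (S N)).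
    change (qpoch (- q ^ 2) (q ^ 2) (S N)) with (G (S N)).
    change (qpoch q (q ^ 2) (S (S N))) with (H (S (S N))).
    rewrite (G_S (S N)), (H_S (S N)), (P3 (S N)).
    set (y := q ^ (2 * S N)).
    field. split.
    + apply one_minus_nz. apply Cmod_mul_lt1; auto. unfold y; apply qk_le1.
    + apply H_nz.
Qed.

Lemma GD n : G n * D n = E n * H n.
Proof.
  induction n as [|n IH].
  - reflexivity.
  - rewrite D_S, E_S, G_S, H_S.
    replace (G n * (1 - - q ^ 2 * q ^ (2 * n)) * (D n * (1 - q * q ^ (2 * n)) * (1 - q * (q * q ^ (2 * n)))))
      with ((G n * D n) * ((1 + q ^ 2 * q ^ (2 * n)) * (1 - q * q ^ (2 * n)) * (1 - q * (q * q ^ (2 * n))))) by ring.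
    rewrite IH. ring.
Qed.

Lemma part2 : exists S : C, is_series g S /\ (1 + q) * S = A / B - 1.
Proof.
  assert (Hq1 : 1 + q <> 0) by (apply one_plus_nz; auto).
  exists ((A / B - 1) / (1 + q)). split; [|field; repeat split; try apply B_nz; auto].
  apply (proj1 (cv_filterlim _ _)).
  apply cv_ext with (fun N => (E (S N) / D (S N) - 1) / (1 + q)).
  { intros N. 
    assert (G (S N) / H (S N) = E (S N) / D (S N)).
    { pose proof (H_nz (S N)). pose proof (D_nz (S N)).
      assert (E1 : G (S N) = E (S N) * H (S N) / D (S N)) by (rewrite <- GD; field; auto).
      rewrite E1. field. auto. }
    change (@eq C ((E (S N) / D (S N) - 1) / (1 + q)) (sum_n g N)).
    rewrite <- H0, <- tele2. field. auto. }
  apply cv_div; [auto| |apply cv_const]. apply cv_minus; [|apply cv_const].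
  apply cv_div. apply B_nz.
  - unfold E, A. apply (cv_sub (qpoch (q^4) (q^4))). intros; lia. apply qpoch_cv, q4_lt1.
  - unfold D, B. apply (cv_sub (qpoch q q)). intros; lia. apply qpoch_cv; auto.
Qed.

End Main.

Theorem theorem1 (q : C) (hq : (Cmod q < 1)%R) :
  is_series
    (fun n : nat =>
       q ^ (2 * n) * qpoch_inf (q ^ (4 * n + 4)) (q ^ 4) * qpoch q q (2 * n))
    (2 * qpoch_inf (q ^ 4) (q ^ 4) / (1 + q) - qpoch_inf q q / (1 + q))
  /\
  exists S : C,
    is_series
      (fun n : nat =>
         qpoch (- q ^ 2) (q ^ 2) n * q ^ (2 * n + 1) / qpoch q (q ^ 2) (n + 1))
      S
    /\ (1 + q) * S = qpoch_inf (q ^ 4) (q ^ 4) / qpoch_inf q q - 1.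
Proof.
  split.
  - exact (part1 q hq).
  - exact (part2 q hq).
Qed.
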